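(* Suppose $\hat q^{[k]}\in\Delta_\delta$ for all $k\ge1$. Then for every round $t\ge2$, all $s\in\mathcal S$, $a\in\mathcal A$, and every integer $l\ge0$, regardless of the history up to round $t-1$ (i.e. conditionally on any such history), $\Pr\big((s^t,a^t)\ne(s,a),\dots,(s^{t+l},a^{t+l})\ne(s,a)\big)\le(1-\alpha\delta)^{l+1}$.
   Context: $\mathcal S,\mathcal A$ finite; $P$ is a transition kernel with $P(s'|s,a)\ge\alpha>0$ for all $s,s',a$, and $s^{t+1}\sim P(\cdot|s^t,a^t)$. $\Delta$ is the set of $q\in\mathbb R_+^{\mathcal S\times\mathcal A\times\mathcal S}$ with $\sum_{s,a,s'}q(s,a,s')=1$ and $\sum_{s',a}q(s',a,s)=\sum_{a,s'}q(s,a,s')$ for all $s$; $\Delta_\delta=\{q\in\Delta:\sum_{s'}q(s,a,s')\ge\delta\ \forall s,a\}$ for $\delta\in(0,1)$; the policy induced by $q$ is $\pi^q(a|s)=\sum_{s'}q(s,a,s')/\sum_{a',s'}q(s,a',s')$. In algorithm IHMDP-VCG, time is divided into episodes $k=1,2,\dots$; in each round $t$ of episode $k$ the action is drawn as $a^t\sim\pi^{[k]}(\cdot|s^t)$ with $\pi^{[k]}=\pi^{\hat q^{[k]}}$, where $\hat q^{[k]}$ is determined by the history before episode $k$. *)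

(* Defs.v *)
From mathcomp Require Import all_boot all_order all_algebra.
Set Implicit Arguments. Unset Strict Implicit. Unset Printing Implicit Defensive.
Import Order.TTheory GRing.Theory Num.Theory.
Local Open Scope ring_scope.

Section Defs.
Variables (R : realFieldType) (S A : finType).

(* A transition kernel P(s'|s,a) is written  P s a s'. *)
Definition is_kernel (P : S -> A -> S -> R) : Prop :=
  (forall s a s', 0 <= P s a s') /\ (forall s a, \sum_(s' : S) P s a s' = 1).

Definition in_Delta (q : S -> A -> S -> R) : Prop :=
  (forall s a s', 0 <= q s a s') /\
  (\sum_(s : S) \sum_(a : A) \sum_(s' : S) q s a s' = 1) /\
  (forall s, \sum_(s' : S) \sum_(a : A) q s' a s = \sum_(a : A) \sum_(s' : S) q s a s').

Definition in_Delta_delta (delta : R) (q : S -> A -> S -> R) : Prop :=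
  in_Delta q /\ (forall s a, delta <= \sum_(s' : S) q s a s').

Definition pol_of (q : S -> A -> S -> R) (s : S) (a : A) : R :=
  (\sum_(s' : S) q s a s') / (\sum_(a' : A) \sum_(s' : S) q s a' s').

Definition next_state_prob (P : S -> A -> S -> R) (hist : seq (S * A)) (y : S) : R :=
  if rev hist is (x, u) :: _ then P x u y else 0.

(* Conditional probability, given the history hist = ((s^1,a^1),...,(s^{t-1},a^{t-1})),
   that the next rounds produce exactly the state-action pairs of the continuation c.
   pol hist y b = probability of action b at state y when the history before the
   current round is hist. *)
Fixpoint cont_prob (P : S -> A -> S -> R) (pol : seq (S * A) -> S -> A -> R)
    (hist : seq (S * A)) (c : seq (S * A)) : R :=
  match c with
  | [::] => 1
  | (y, b) :: c' => next_state_prob P hist y * pol hist y b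
                    * cont_prob P pol (rcons hist (y, b)) c'
  end.

(* Policy of IHMDP-VCG at the round following history hist (round number size hist + 1):
   a ~ pi^{[k]} with k = ep (round), pi^{[k]} = pi^{qhat k hist}. *)
Definition vcg_pol (ep : nat -> nat) (qhat : nat -> seq (S * A) -> S -> A -> S -> R)
    (hist : seq (S * A)) (y : S) (b : A) : R :=
  pol_of (qhat (ep (size hist).+1) hist) y b.

End Defs.

(* Main.v *)
Require Import Defs.
From mathcomp Require Import all_boot all_order all_algebra.
Import Order.TTheory GRing.Theory Num.Theory.
Local Open Scope ring_scope.
Set Implicit Arguments. Unset Strict Implicit.

Lemma sum_tupleS (R : realFieldType) (T : finType) n (F : (n.+1).-tuple T -> R) :
  \sum_(c : (n.+1).-tuple T) F c = \sum_(x : T) \sum_(t : n.-tuple T) F [tuple of x :: t].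
Proof.
rewrite pair_big /=.
rewrite (reindex (fun p : T * n.-tuple T => [tuple of p.1 :: p.2])) //=.
exists (fun c : (n.+1).-tuple T => (thead c, [tuple of behead c])).
  move=> [x t] _ /=; rewrite theadE; congr pair; exact: val_inj.
by move=> c _ /=; rewrite [RHS]tuple_eta.
Qed.

Lemma sum_tuple0 (R : realFieldType) (T : finType) (F : 0.-tuple T -> R) :
  \sum_(c : 0.-tuple T) F c = F [tuple].
Proof.
rewrite (big_pred1 [tuple]) // => c /=; apply/esym/eqP; exact: tuple0.
Qed.

Section Pol.
Variables (R : realFieldType) (S A : finType).
Variables (q : S -> A -> S -> R) (delta : R).
Hypothesis hq : in_Delta_delta delta q.
Hypothesis hd : 0 < delta.

Let N (y : S) (b : A) := \sum_(s' : S) q y b s'.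
Let D (y : S) := \sum_(a' : A) \sum_(s' : S) q y a' s'.

Lemma N_ge0 y b : 0 <= N y b.
Proof. case: hq => [[h0 _] _]. by apply: sumr_ge0 => i _. Qed.

Lemma N_le_D y b : N y b <= D y.
Proof.
rewrite /D (bigD1 b) //= lerDl. by apply: sumr_ge0 => i _; exact: N_ge0.
Qed.

Lemma D_gt0 (y : S) (b : A) : 0 < D y.
Proof.
case: hq => [_ h]. apply: (lt_le_trans hd). apply: le_trans (h y b) _. exact: N_le_D.
Qed.

Lemma D_le1 y : D y <= 1.
Proof.
case: hq => [[h0 [h1 _]] _]. rewrite -h1 (bigD1 y) //= lerDl.
apply: sumr_ge0 => i _; apply: sumr_ge0 => j _; apply: sumr_ge0 => k _; exact: h0.
Qed.

Lemma pol_ge0 y b : 0 <= pol_of q y b.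
Proof. rewrite /pol_of divr_ge0 //; [exact: N_ge0 | exact: ltW (D_gt0 y b)]. Qed.

Lemma pol_ge_delta y b : delta <= pol_of q y b.
Proof.
case: hq => [_ h]. apply: le_trans (h y b) _.
rewrite /pol_of ler_pdivlMr; last exact: (D_gt0 y b).
rewrite -{2}[\sum_s' q y b s']mulr1 ler_wpM2l //; [exact: N_ge0 | exact: D_le1].
Qed.

Lemma pol_sum1 y (b0 : A) : \sum_(b : A) pol_of q y b = 1.
Proof.
rewrite /pol_of -mulr_suml mulfV //. exact: lt0r_neq0 (D_gt0 y b0).
Qed.
End Pol.

Section Main.
Variables (R : realFieldType) (S A : finType)
  (P : S -> A -> S -> R) (alpha delta : R)
  (ep : nat -> nat) (qhat : nat -> seq (S * A) -> S -> A -> S -> R).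
Hypotheses (hP : is_kernel P) (ha : 0 < alpha) (hPa : forall s a s', alpha <= P s a s')
  (hd : 0 < delta < 1) (hep : forall tau, (1 <= ep tau)%N)
  (hqh : forall k hist, (1 <= k)%N -> in_Delta_delta delta (qhat k hist)).
Variables (s : S) (a : A).

Let w (H : seq (S * A)) (x : S * A) :=
  next_state_prob P H x.1 * vcg_pol ep qhat H x.1 x.2.

Let hd0 : 0 < delta.
Proof. by case/andP: hd. Qed.

Let hq H : in_Delta_delta delta (qhat (ep (size H).+1) H).
Proof. exact: hqh. Qed.

Lemma nsp_rcons h z y : next_state_prob P (rcons h z) y = P z.1 z.2 y.
Proof. by rewrite /next_state_prob rev_rcons; case: z. Qed.

Lemma w_ge0 h z x : 0 <= w (rcons h z) x.
Proof.
rewrite /w nsp_rcons mulr_ge0 //; first by case: hP => h0 _; exact: h0.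
rewrite /vcg_pol; exact: (pol_ge0 (hq _) hd0).
Qed.

Lemma w_sum1 h z : \sum_x w (rcons h z) x = 1.
Proof.
rewrite (eq_bigr (fun x => w (rcons h z) (x.1, x.2))); last by case.
rewrite -(pair_bigA _ (fun y b => w (rcons h z) (y, b))) /=.
transitivity (\sum_(y : S) P z.1 z.2 y).
  apply: eq_bigr => y _; rewrite /w /= -mulr_sumr /vcg_pol nsp_rcons.
  by rewrite (pol_sum1 (hq _) hd0 _ a) mulr1.
by case: hP => _ h1; exact: h1.
Qed.

Lemma w_sa h z : alpha * delta <= w (rcons h z) (s, a).
Proof.
rewrite /w nsp_rcons /=. apply: ler_pM => //.
- exact: ltW.
- exact: ltW.
- exact: (pol_ge_delta (hq _) hd0).
Qed.

Let Pr := fun p : S * A => p != (s, a).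

Lemma key n : forall h z,
  \sum_(c : n.-tuple (S * A)) (if all Pr c then cont_prob P (vcg_pol ep qhat) (rcons h z) c else 0)
  <= (1 - alpha * delta) ^+ n.
Proof.
have c0 : 0 <= 1 - alpha * delta.
  rewrite subr_ge0; apply: le_trans (w_sa [::] (s, a)) _.
  rewrite -(w_sum1 [::] (s, a)) (bigD1 (s, a)) //= lerDl.
  by apply: sumr_ge0 => x _; exact: (w_ge0 [::] (s, a) x).
elim: n => [|n IH] h z.
  by rewrite sum_tuple0 /= expr0.
rewrite sum_tupleS.
set G := fun H => \sum_(c : n.-tuple (S * A)) (if all Pr c then cont_prob P (vcg_pol ep qhat) H c else 0).
have E : forall x, \sum_(t : n.-tuple (S * A))
    (if all Pr [tuple of x :: t] then cont_prob P (vcg_pol ep qhat) (rcons h z) [tuple of x :: t] else 0)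
    = if Pr x then w (rcons h z) x * G (rcons (rcons h z) x) else 0.
  move=> [y b] /=. case: ifP => hx /=.
    rewrite /G mulr_sumr; apply: eq_bigr => t _ /=.
    by case: ifP => _; rewrite ?mulr0.
  by rewrite big1 // => t _.
under eq_bigr do rewrite E.
apply: (@le_trans _ _ (\sum_x (if Pr x then w (rcons h z) x * (1 - alpha * delta) ^+ n else 0))).
  apply: ler_sum => x _; case: ifP => // _.
  apply: ler_wpM2l; first exact: w_ge0.
  case: x => y b; exact: IH.
rewrite -big_mkcond /= -mulr_suml exprS ler_wpM2r ?exprn_ge0 //.
have := w_sum1 h z; rewrite (bigD1 (s, a)) //= => e.
rewrite -e addrAC lerDr subr_ge0.
exact: w_sa.
Qed.
End Main.

Unset Implicit Arguments.
Theorem lemma7 (R : realFieldType) (S A : finType)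
  (P : S -> A -> S -> R) (alpha delta : R)
  (ep : nat -> nat) (qhat : nat -> seq (S * A) -> S -> A -> S -> R) :
  is_kernel P ->
  0 < alpha -> (forall s a s', alpha <= P s a s') ->
  0 < delta < 1 ->
  (forall tau, (1 <= ep tau)%N) ->
  (forall k hist, (1 <= k)%N -> in_Delta_delta delta (qhat k hist)) ->
  forall (t : nat) (hist : seq (S * A)) (s : S) (a : A) (l : nat),
    (2 <= t)%N -> size hist = t.-1 ->
    \sum_(c : (l.+1).-tuple (S * A) | all (fun p => p != (s, a)) c)
        cont_prob P (vcg_pol ep qhat) hist c
    <= (1 - alpha * delta) ^+ l.+1.
Proof.
move=> hP ha hPa hd hep hqh t hist s a l ht hs.
case/lastP: hist hs => [|h z] hs.
  by move: ht hs; case: t => [|[|t]].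
rewrite big_mkcond /=.
exact: (key hP ha hPa hd hep hqh s a l.+1 h z).
Qed.
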